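(* Let $n_b\ge 1$, $d_l\ge 4$, $L\ge 5$, $M\ge 1$ be integers, and let $H$ be a quasi-cyclic SC-LDPC parity-check matrix with parameters $(n_b,d_l,L,M)$ and reuse $T=3$ (as defined in the context). Then, for every choice of the shift values $p_{x,y}$ satisfying the reuse-$3$ condition, the Tanner graph of $H$ contains a cycle of length at most $10$; in particular its girth is at most $10$.
   Context: Quasi-cyclic SC-LDPC matrix: fix integers $n_b\ge1$ (bit nodes per protograph; one check node per protograph), $d_l\ge 2$, $L\ge1$, $M\ge1$. $H$ is a binary block matrix with $L+d_l-1$ block rows (indexed $x=1,\dots,L+d_l-1$) and $n_bL$ block columns (indexed $y=1,\dots,n_bL$), each block of size $M\times M$. For a block column $y$ put $t(y)=\lceil y/n_b\rceil$. Block $(x,y)$ is the all-zero matrix unless $t(y)\le x\le t(y)+d_l-1$, in which case it equals the circulant permutation matrix $I_{(p_{x,y})}$ for a shift value $p_{x,y}\in\{0,\dots,M-1\}$; here $I_{(p)}$ is the $M\times M$ matrix whose row $r$ ($0\le r\le M-1$) has a single $1$, in column $(r+p)\bmod M$, and zeros elsewhere. Reuse-$T$ condition (periodic time-variant construction with period $T$): $p_{x+T,\,y+Tn_b}=p_{x,y}$ whenever both $(x,y)$ and $(x+T,y+Tn_b)$ are nonzero blocks of $H$; otherwise the shift values are arbitrary. The Tanner graph of $H$ is the bipartite graph with one bit node per column and one check node per row of $H$, a bit node and check node being adjacent iff the corresponding entry of $H$ is $1$. The girth is the length of a shortest cycle in the Tanner graph. *)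

(* Defs.v *)
From mathcomp Require Import all_boot.
Set Implicit Arguments. Unset Strict Implicit. Unset Printing Implicit Defensive.

(* t(y) = ceil(y / nb), for nb >= 1 *)
Definition tcol (nb y : nat) : nat := (y + nb - 1) %/ nb.

(* Block (x,y) (1-indexed) lies in the matrix and is a nonzero (circulant) block. *)
Definition nzblock (nb dl L x y : nat) : bool :=
  [&& 1 <= x, x <= L + dl - 1, 1 <= y, y <= nb * L,
      tcol nb y <= x & x <= tcol nb y + dl - 1].

(* Entry of H in row r (0..M-1) of block row x and column c (0..M-1) of block
   column y: block is I_(p x y), whose row r has its 1 in column (r + p) mod M. *)
Definition Hentry (nb dl L M : nat) (p : nat -> nat -> nat)
    (chk : nat * nat) (bit : nat * nat) : bool :=
  let: (x, r) := chk in let: (y, c) := bit in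
  [&& nzblock nb dl L x y, r < M, c < M & c == (r + p x y) %% M].

Definition reuse (nb dl L T : nat) (p : nat -> nat -> nat) : Prop :=
  forall x y, nzblock nb dl L x y -> nzblock nb dl L (x + T) (y + T * nb) ->
    p (x + T) (y + T * nb) = p x y.

(* A cycle of length 2k in the Tanner graph: distinct check nodes chk 0..k-1,
   distinct bit nodes bit 0..k-1, with chk i -- bit i -- chk (i+1 mod k). *)
Definition tanner_cycle (nb dl L M : nat) (p : nat -> nat -> nat) (k : nat)
    (chk bit : nat -> nat * nat) : Prop :=
  [/\ 2 <= k,
      (forall i j, i < k -> j < k -> chk i = chk j -> i = j),
      (forall i j, i < k -> j < k -> bit i = bit j -> i = j) &
      (forall i, i < k ->
         Hentry nb dl L M p (chk i) (bit i) /\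
         Hentry nb dl L M p (chk ((i + 1) %% k)) (bit i))].

(* Main.v *)
Require Import Defs.
From mathcomp Require Import all_boot all_algebra zify ring.
Import GRing.Theory.
Lemma tcolE nb t : 0 < nb -> tcol nb (1 + t*nb) = t.+1.
Proof. move=> h; rewrite /tcol (_ : 1 + t*nb + nb - 1 = t.+1 * nb) ?mulnK // mulSn; lia. Qed.
Lemma nzE nb dl L x t : 0 < nb -> t < L -> t.+1 <= x -> x <= t + dl -> x <= L + dl - 1 ->
  nzblock nb dl L x (1 + t*nb).
Proof. move=> h1 h2 h3 h4 h5; rewrite /nzblock tcolE //.
have : t.+1 * nb <= L * nb by rewrite leq_mul2r h2 orbT.
rewrite mulSn mulnC => h6. apply/and5P; split; try lia. Qed.
Lemma hZ m nb dl L p x y (r c : 'Z_(m.+2)) : nzblock nb dl L x y -> c = (r + inZp (p x y))%R ->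
  Hentry nb dl L m.+2 p (x, val r) (y, val c).
Proof. move=> hn ->; rewrite /Hentry hn !ltn_ord /=. by rewrite modnDmr. Qed.
Lemma reuseE nb dl L p x t : reuse nb dl L 3 p -> 0 < nb -> t + 3 < L -> t.+1 <= x -> x <= t + dl ->
  x + 3 <= L + dl - 1 -> p (x + 3) (1 + (t + 3) * nb) = p x (1 + t * nb).
Proof.
move=> hr h1 h2 h3 h4 h5.
rewrite (_ : 1 + (t+3)*nb = 1 + t*nb + 3*nb); last by rewrite mulnDl addnA.
apply: hr; first (apply: nzE => //; lia).
rewrite -addnA -mulnDl; apply: nzE => //; lia.
Qed.

Theorem lemma3 (nb dl L M : nat) (p : nat -> nat -> nat) :
  1 <= nb -> 4 <= dl -> 5 <= L -> 1 <= M ->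
  (forall x y, nzblock nb dl L x y -> p x y < M) ->
  reuse nb dl L 3 p ->
  exists k (chk bit : nat -> nat * nat),
    2 * k <= 10 /\ tanner_cycle nb dl L M p k chk bit.
Proof.
move=> hnb hdl hL hM hp hr.
have nz : forall x t, t < L -> t.+1 <= x -> x <= t + dl -> nzblock nb dl L x (1 + t*nb).
  move=> x t h1 h2 h3; apply: nzE => //; lia.
case: M hM hp => [//|[|m]] _ hp.
  exists 2, (nth (0,0) [:: (3,0); (2,0)]), (nth (0,0) [:: (1+0*nb,0); (1+1*nb,0)]).
  split => //; split => //.
  - by move=> [|[|i]] [|[|j]].
  - move=> [|[|i]] [|[|j]] //= _ _ []; lia.
  - move=> [|[|i]] // _; rewrite /Hentry /= !modn1 !andbT; split; apply: nz; lia.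
have h54 : p 5 (1+3*nb) = p 2 (1+0*nb) by apply: (reuseE nb dl L p 2 0 hr) => //; lia.
have h64 : p 6 (1+3*nb) = p 3 (1+0*nb) by apply: (reuseE nb dl L p 3 0 hr) => //; lia.
have h55 : p 5 (1+4*nb) = p 2 (1+1*nb) by apply: (reuseE nb dl L p 2 1 hr) => //; lia.
have h65 : p 6 (1+4*nb) = p 3 (1+1*nb) by apply: (reuseE nb dl L p 3 1 hr) => //; lia.
set A : 'Z_(m.+2) := inZp (p 2 (1+0*nb)).
set B : 'Z_(m.+2) := inZp (p 3 (1+0*nb)).
set C : 'Z_(m.+2) := inZp (p 2 (1+1*nb)).
set D : 'Z_(m.+2) := inZp (p 3 (1+1*nb)).
set E : 'Z_(m.+2) := inZp (p 5 (1+1*nb)).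
case: (eqVneq (B + C) (A + D))%R => e.
  pose r0 : 'Z_(m.+2) := 0%R. pose r1 := (B - A)%R.
  pose c0 := B. pose c1 := D.
  exists 2, (nth (0,0) [:: (3,val r0); (2,val r1)]), (nth (0,0) [:: (1+0*nb,val c0); (1+1*nb,val c1)]).
  split => //; split => //.
  - by move=> [|[|i]] [|[|j]].
  - move: (val r0) (val r1) => a0 a1.
    move=> [|[|i]] [|[|j]] //= _ _ []; lia.
  - move=> [|[|i]] // _; split.
    + apply: (@hZ m nb dl L p _ _ r0 c0); [apply: nz; lia | rewrite /r0 /c0 /B; ring].
    + apply: (@hZ m nb dl L p _ _ r1 c0); [apply: nz; lia | rewrite /r1 /c0 -/A; ring].
    + apply: (@hZ m nb dl L p _ _ r1 c1); [apply: nz; lia | rewrite /r1 /c1 -/C].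
      rewrite (_ : D = B + C - A)%R; first ring. rewrite e; ring.
    + apply: (@hZ m nb dl L p _ _ r0 c1); [apply: nz; lia | rewrite /r0 /c1 -/D; ring].
pose r0 : 'Z_(m.+2) := 0%R. pose r1 := (B - A)%R. pose r2 := (B - A + C - E)%R.
pose r3 := (C - E)%R. pose r4 := (D - E)%R.
pose c0 := B. pose c1 := (B - A + C)%R. pose c2 := (B + C - E)%R. pose c3 := (C - E + D)%R.
pose c4 := D.
have n24 : r2 != r4.
  apply: contra_neq e; rewrite /r2 /r4 => h.
  rewrite (_ : B + C = (B - A + C - E) + A + E)%R; [rewrite h; ring | ring].
have n14 : c1 != c4.
  apply: contra_neq e; rewrite /c1 /c4 => h.
  rewrite (_ : B + C = (B - A + C) + A)%R; [rewrite h; ring | ring].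
exists 5, (nth (0,0) [:: (3,val r0); (2,val r1); (5, val r2); (6, val r3); (5, val r4)]),
  (nth (0,0) [:: (1+0*nb,val c0); (1+1*nb,val c1); (1+3*nb, val c2); (1+4*nb, val c3); (1+1*nb, val c4)]).
split => //; split => //.
- have h24 : val r2 != val r4 by apply: contra_neq n24 => /val_inj.
  move: h24; move: (val r0) (val r1) (val r2) (val r3) (val r4) => a0 a1 a2 a3 a4 h24.
  move=> [|[|[|[|[|i]]]]] [|[|[|[|[|j]]]]] //= _ _ []; try lia;
  move=> _ h; by rewrite h eqxx in h24.
- have h14 : val c1 != val c4 by apply: contra_neq n14 => /val_inj.
  move: h14; move: (val c0) (val c1) (val c2) (val c3) (val c4) => a0 a1 a2 a3 a4 h14.
  move=> [|[|[|[|[|i]]]]] [|[|[|[|[|j]]]]] //= _ _ []; try lia;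
  move=> _ h; by rewrite h eqxx in h14.
- move=> [|[|[|[|[|i]]]]] // _; split.
  + apply: (@hZ m nb dl L p _ _ r0 c0); [apply: nz; lia | rewrite /r0 /c0 -/B; ring].
  + apply: (@hZ m nb dl L p _ _ r1 c0); [apply: nz; lia | rewrite /r1 /c0 -/A; ring].
  + apply: (@hZ m nb dl L p _ _ r1 c1); [apply: nz; lia | rewrite /r1 /c1 -/C; ring].
  + apply: (@hZ m nb dl L p _ _ r2 c1); [apply: nz; lia | rewrite /r2 /c1 -/E; ring].
  + apply: (@hZ m nb dl L p _ _ r2 c2); [apply: nz; lia | rewrite /r2 /c2 h54 -/A; ring].
  + apply: (@hZ m nb dl L p _ _ r3 c2); [apply: nz; lia | rewrite /r3 /c2 h64 -/B; ring].
  + apply: (@hZ m nb dl L p _ _ r3 c3); [apply: nz; lia | rewrite /r3 /c3 h65 -/D; ring].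
  + apply: (@hZ m nb dl L p _ _ r4 c3); [apply: nz; lia | rewrite /r4 /c3 h55 -/C; ring].
  + apply: (@hZ m nb dl L p _ _ r4 c4); [apply: nz; lia | rewrite /r4 /c4 -/E; ring].
  + apply: (@hZ m nb dl L p _ _ r0 c4); [apply: nz; lia | rewrite /r0 /c4 -/D; ring].
Qed.
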